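(* Let $P$ be a finite nonempty set of points lying in a single quadrant $Q$ with respect to the origin $s$, and let $e\neq s$ be such that the line $\overline{se}$ is in the quadrant $Q$ and lies between the two bounding lines, i.e. $\theta_{lb} \le \theta_{s,e} \le \theta_{ub}$. Then, with $d^{\max}=\max_{p\in P} d(p,\overline{se})$, $$d^{\max} \ge d^{lb} := \max\Big\{ \min\{d(l_1,\overline{se}),d(l_2,\overline{se})\},\ \min\{d(u_1,\overline{se}),d(u_2,\overline{se})\},\ D\Big\},$$ where $D = d^{corner\text{-}near}$ if $d(s,e) < d(s,c_f)$ and $D = d^{corner\text{-}far}$ if $d(s,e)\ge d(s,c_f)$; and $$d^{\max} \le d^{ub} := \max\{ d^{intersection},\ d^{corner\text{-}far}\},$$ where $d^{intersection}$ here denotes $\max\{d(l_1,\overline{se}),d(l_2,\overline{se}),d(u_1,\overline{se}),d(u_2,\overline{se})\}$.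
   Context: Bounded Quadrant System (BQS) setup. Points are in the plane with UTM-projected $x$ and $y$ axes, and the start point $s$ is taken as the origin. For a point $p\ne s$, $\theta(p)\in[0,2\pi)$ is the angle between the positive $x$ axis and the vector from $s$ to $p$; $\theta_{s,e}=\theta(e)$. The four quadrants are $Q_k=\{p\neq s: (k-1)\pi/2 \le \theta(p) < k\pi/2\}$, $k=1,\dots,4$; quadrant $Q_k$ has angle range $[\theta^Q_{start},\theta^Q_{end}) = [(k-1)\pi/2,k\pi/2)$. A line $\overline{se}$ is ''in'' quadrant $Q$ if $\theta^Q_{start}\le \theta_{s,e}<\theta^Q_{end}$. For a finite nonempty $P\subset Q$: the bounding box is the smallest closed axis-parallel rectangle containing $P$, with corners $c_1,\dots,c_4$; $c_n$ and $c_f$ are the corners of the box nearest to and farthest from the origin $s$ (e.g. in the first quadrant $c_n=(x_{\min},y_{\min})$, $c_f=(x_{\max},y_{\max})$). $\theta_{lb}=\min_{p\in P}\theta(p)$ and $\theta_{ub}=\max_{p\in P}\theta(p)$; the lower (resp. upper) bounding line is the ray from $s$ at angle $\theta_{lb}$ (resp. $\theta_{ub}$). $l_1,l_2$ are the intersection points of the lower bounding line with the boundary of the bounding box and $u_1,u_2$ those of the upper bounding line, with index 1 the intersection nearer to $s$ (they may coincide). $d(p,\overline{se})$ is the Euclidean distance from the point $p$ to the line segment from $s$ to $e$. Notation: $d^{corner}=\{d(c_i,\overline{se}): i=1,\dots,4\}$, $d^{corner\text{-}near}=d(c_n,\overline{se})$, $d^{corner\text{-}far}=d(c_f,\overline{se})$,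 $d^{intersection}=\{d(p,\overline{se}): p\in\{l_1,l_2,u_1,u_2\}\}$. *)

(* Defs.v *)
From Stdlib Require Import Reals Lra List.
Open Scope R_scope.

(* Points of the plane; the start point s is the origin (0,0). *)
Definition pt := (R * R)%type.
Definition origin : pt := (0, 0).

Definition pnorm (p : pt) : R := sqrt (fst p * fst p + snd p * snd p).
Definition edist (p q : pt) : R := pnorm (fst p - fst q, snd p - snd q).

Definition theta (p : pt) : R :=
  if Rle_dec 0 (snd p) then acos (fst p / pnorm p)
  else 2 * PI - acos (fst p / pnorm p).

Definition in_quadrant (k : nat) (p : pt) : Prop :=
  p <> origin /\
  INR (k - 1) * (PI / 2) <= theta p < INR k * (PI / 2).

Definition dot (p q : pt) : R := fst p * fst q + snd p * snd q.
Definition clamp01 (t : R) : R := Rmax 0 (Rmin 1 t).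
Definition dseg (p e : pt) : R :=
  let t := clamp01 (dot p e / dot e e) in
  edist p (t * fst e, t * snd e).

(* max / min of a nonempty list (value 0 on the empty list, never used) *)
Definition max_list (l : list R) : R :=
  match l with nil => 0 | x :: t => fold_left Rmax t x end.
Definition min_list (l : list R) : R :=
  match l with nil => 0 | x :: t => fold_left Rmin t x end.

Definition xmin (P : list pt) := min_list (map fst P).
Definition xmax (P : list pt) := max_list (map fst P).
Definition ymin (P : list pt) := min_list (map snd P).
Definition ymax (P : list pt) := max_list (map snd P).

Definition in_box (P : list pt) (q : pt) : Prop :=
  xmin P <= fst q <= xmax P /\ ymin P <= snd q <= ymax P.
Definition on_box_boundary (P : list pt) (q : pt) : Prop :=
  in_box P q /\
  (fst q = xmin P \/ fst q = xmax P \/ snd q = ymin P \/ snd q = ymax P).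

Definition corners (P : list pt) : list pt :=
  (xmin P, ymin P) :: (xmax P, ymin P) :: (xmax P, ymax P) :: (xmin P, ymax P) :: nil.

(* Since P lies in one quadrant,
   all x-coordinates (resp. y-coordinates) have the same sign, so the nearest
   corner takes in each coordinate the bound of smaller absolute value, and the
   farthest one the bound of larger absolute value (e.g. in Q_1:
   c_n = (xmin,ymin), c_f = (xmax,ymax)). *)
Definition near_coord (a b : R) : R := if Rle_dec (Rabs a) (Rabs b) then a else b.
Definition far_coord (a b : R) : R := if Rle_dec (Rabs a) (Rabs b) then b else a.
Definition c_near (P : list pt) : pt :=
  (near_coord (xmin P) (xmax P), near_coord (ymin P) (ymax P)).
Definition c_far (P : list pt) : pt :=
  (far_coord (xmin P) (xmax P), far_coord (ymin P) (ymax P)).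

Definition theta_lb (P : list pt) := min_list (map theta P).
Definition theta_ub (P : list pt) := max_list (map theta P).

Definition on_ray (a : R) (q : pt) : Prop :=
  exists r, 0 <= r /\ q = (r * cos a, r * sin a).

(* (p1, p2) are the intersection points of the ray at angle a with the boundary
   of the bounding box of P, p1 being the one nearer to s (they may coincide):
   both lie on the ray and the boundary, and every intersection point lies
   (along the ray) between them. *)
Definition ray_box_intersections (P : list pt) (a : R) (p1 p2 : pt) : Prop :=
  on_ray a p1 /\ on_box_boundary P p1 /\
  on_ray a p2 /\ on_box_boundary P p2 /\
  pnorm p1 <= pnorm p2 /\
  (forall q, on_ray a q -> on_box_boundary P q -> pnorm p1 <= pnorm q <= pnorm p2).

(* Main.v *)
Require Import Defs.
From Stdlib Require Import Reals List Lra Lia Psatz.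
Open Scope R_scope.


Definition cross (p q : pt) : R := fst p * snd q - snd p * fst q.
Definition scal (r : R) (p : pt) : pt := (r * fst p, r * snd p).

Lemma pnorm_ge0 p : 0 <= pnorm p.
Proof. unfold pnorm; apply sqrt_pos. Qed.

Lemma pnorm_sq p : pnorm p * pnorm p = fst p * fst p + snd p * snd p.
Proof. unfold pnorm; apply sqrt_sqrt; nra. Qed.

Lemma pnorm_le p q : fst p * fst p + snd p * snd p <= fst q * fst q + snd q * snd q -> pnorm p <= pnorm q.
Proof. intros; unfold pnorm; apply sqrt_le_1_alt; auto. Qed.

Lemma pnorm_le_inv p q : pnorm p <= pnorm q -> fst p * fst p + snd p * snd p <= fst q * fst q + snd q * snd q.
Proof. intros H. pose proof (pnorm_sq p). pose proof (pnorm_sq q). pose proof (pnorm_ge0 p). nra. Qed.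

Lemma pnorm_scal r p : 0 <= r -> pnorm (scal r p) = r * pnorm p.
Proof. intros. replace (r * pnorm p) with (sqrt (r*r) * pnorm p) by (rewrite sqrt_square; auto).
  unfold pnorm, scal; simpl. rewrite <- sqrt_mult_alt by nra. f_equal; ring. Qed.

Lemma pnorm_add a b : pnorm (fst a + fst b, snd a + snd b) <= pnorm a + pnorm b.
Proof.
  pose proof (pnorm_sq a). pose proof (pnorm_sq b). pose proof (pnorm_ge0 a). pose proof (pnorm_ge0 b).
  assert (Hab: fst a * fst b + snd a * snd b <= pnorm a * pnorm b).
  { assert (L: (fst a * fst b + snd a * snd b)^2 <= (pnorm a * pnorm b)^2).
    { replace ((pnorm a * pnorm b)^2) with ((pnorm a * pnorm a) * (pnorm b * pnorm b)) by ring.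
      rewrite H, H0. pose proof (pow2_ge_0 (fst a * snd b - snd a * fst b)). nra. }
    assert (0 <= pnorm a * pnorm b) by (apply Rmult_le_pos; auto). nra. }
  rewrite <- (sqrt_square (pnorm a + pnorm b)) by lra.
  unfold pnorm at 1. apply sqrt_le_1_alt. simpl. nra.
Qed.

Lemma clamp_bounds t : 0 <= clamp01 t <= 1.
Proof. unfold clamp01, Rmax, Rmin; repeat destruct Rle_dec; lra. Qed.
Lemma clamp_lo t : t <= 0 -> clamp01 t = 0.
Proof. intros; unfold clamp01, Rmax, Rmin; repeat destruct Rle_dec; lra. Qed.
Lemma clamp_hi t : 1 <= t -> clamp01 t = 1.
Proof. intros; unfold clamp01, Rmax, Rmin; repeat destruct Rle_dec; lra. Qed.
Lemma clamp_mid t : 0 <= t <= 1 -> clamp01 t = t.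
Proof. intros; unfold clamp01, Rmax, Rmin; repeat destruct Rle_dec; lra. Qed.

Definition dsq (q e : pt) (t : R) : R :=
  (fst q - t * fst e) * (fst q - t * fst e) + (snd q - t * snd e) * (snd q - t * snd e).

Lemma dseg_eq q e : dseg q e = sqrt (dsq q e (clamp01 (dot q e / dot e e))).
Proof. reflexivity. Qed.

Lemma dsq_pn q e t : sqrt (dsq q e t) = pnorm (fst q - t * fst e, snd q - t * snd e).
Proof. reflexivity. Qed.

Lemma dseg_ge0 q e : 0 <= dseg q e.
Proof. rewrite dseg_eq; apply sqrt_pos. Qed.

Lemma dsq_expand q e s : dsq q e s = dot q q - 2 * s * dot q e + s * s * dot e e.
Proof. unfold dsq, dot; ring. Qed.

Lemma dsq_min q e t : 0 < dot e e -> 0 <= t <= 1 ->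
  dsq q e (clamp01 (dot q e / dot e e)) <= dsq q e t.
Proof.
  intros HE Ht. set (t0 := dot q e / dot e e).
  assert (Hqe: dot q e = t0 * dot e e) by (unfold t0; field; lra).
  rewrite !dsq_expand, Hqe.
  destruct (Rle_dec t0 0).
  - rewrite clamp_lo by auto.
    assert (0 <= t * (t - 2*t0) * dot e e) by (apply Rmult_le_pos; [apply Rmult_le_pos|]; lra). nra.
  - destruct (Rle_dec 1 t0).
    + rewrite clamp_hi by auto.
      assert (0 <= (1 - t) * (2*t0 - 1 - t) * dot e e) by (apply Rmult_le_pos; [apply Rmult_le_pos|]; lra). nra.
    + rewrite clamp_mid by lra.
      assert (0 <= (t - t0) * (t - t0) * dot e e) by (apply Rmult_le_pos; [apply Rle_0_sqr|]; lra). nra.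
Qed.

Lemma dseg_le q e t : 0 < dot e e -> 0 <= t <= 1 ->
  dseg q e <= pnorm (fst q - t * fst e, snd q - t * snd e).
Proof. intros. rewrite dseg_eq, <- dsq_pn. apply sqrt_le_1_alt. apply dsq_min; auto. Qed.

Lemma dseg_conv a b e al be : 0 <= al -> 0 <= be -> al + be <= 1 -> 0 < dot e e ->
  dseg (al * fst a + be * fst b, al * snd a + be * snd b) e <= al * dseg a e + be * dseg b e.
Proof.
  intros H1 H2 H3 HE.
  set (ta := clamp01 (dot a e / dot e e)). set (tb := clamp01 (dot b e / dot e e)).
  pose proof (clamp_bounds (dot a e / dot e e)). pose proof (clamp_bounds (dot b e / dot e e)).
  fold ta tb in H, H0.
  eapply Rle_trans. apply (dseg_le _ e (al * ta + be * tb)); auto. nra.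
  rewrite !dseg_eq. fold ta tb. rewrite !dsq_pn.
  rewrite <- !pnorm_scal by auto.
  eapply Rle_trans; [|apply pnorm_add]. apply pnorm_le. unfold scal; simpl. nra.
Qed.

Lemma dseg_conv_max a b e al be : 0 <= al -> 0 <= be -> al + be <= 1 -> 0 < dot e e ->
  dseg (al * fst a + be * fst b, al * snd a + be * snd b) e <= Rmax (dseg a e) (dseg b e).
Proof.
  intros. eapply Rle_trans. apply dseg_conv; auto.
  pose proof (dseg_ge0 a e); pose proof (dseg_ge0 b e).
  pose proof (Rmax_l (dseg a e) (dseg b e)). pose proof (Rmax_r (dseg a e) (dseg b e)). nra.
Qed.

Lemma dseg_scal a e l : 0 <= l <= 1 -> 0 < dot e e -> dseg (scal l a) e <= dseg a e.
Proof.
  intros. pose proof (dseg_conv a a e l 0). unfold scal.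
  replace (l * fst a, l * snd a) with (l * fst a + 0 * fst a, l * snd a + 0 * snd a) by (f_equal; ring).
  eapply Rle_trans. apply H1; lra. pose proof (dseg_ge0 a e). nra.
Qed.


Lemma sq_le x y : 0 <= x -> 0 <= y -> x * x <= y * y -> x <= y.
Proof. intros. nra. Qed.

Lemma dseg_sq q e : dseg q e * dseg q e = dsq q e (clamp01 (dot q e / dot e e)).
Proof. rewrite dseg_eq. apply sqrt_sqrt. unfold dsq; apply Rplus_le_le_0_compat; apply Rle_0_sqr. Qed.

Lemma dsq_lagr q e t : 0 < dot e e ->
  dot e e * dsq q e t = (t * dot e e - dot q e) * (t * dot e e - dot q e) + cross q e * cross q e.
Proof. intros. unfold dsq, dot, cross. ring. Qed.

Lemma dseg_cross_lower q e : 0 < dot e e ->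
  cross q e * cross q e <= dot e e * (dseg q e * dseg q e).
Proof. intros. rewrite dseg_sq, dsq_lagr by auto. pose proof (Rle_0_sqr (clamp01 (dot q e / dot e e) * dot e e - dot q e)). unfold Rsqr in *. lra. Qed.

Lemma dseg_cross_mid q e : 0 < dot e e -> 0 <= dot q e <= dot e e ->
  dot e e * (dseg q e * dseg q e) = cross q e * cross q e.
Proof.
  intros. rewrite dseg_sq, dsq_lagr by auto. rewrite clamp_mid.
  2:{ split. unfold Rdiv; apply Rmult_le_pos; [lra|]; left; apply Rinv_0_lt_compat; lra. apply Rmult_le_reg_r with (dot e e); auto.
      unfold Rdiv; rewrite Rmult_assoc, Rinv_l; lra. }
  replace (dot q e / dot e e * dot e e - dot q e) with 0 by (field; lra). ring.
Qed.

Lemma dseg_far q e : 0 < dot e e -> dot e e <= dot q e ->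
  dseg q e * dseg q e = (fst q - fst e) * (fst q - fst e) + (snd q - snd e) * (snd q - snd e).
Proof.
  intros. rewrite dseg_sq. rewrite clamp_hi.
  2:{ apply Rmult_le_reg_r with (dot e e); auto. unfold Rdiv; rewrite Rmult_assoc, Rinv_l; lra. }
  unfold dsq; ring.
Qed.

Definition padd (p q : pt) : pt := (fst p + fst q, snd p + snd q).

Lemma mono q d e : 0 < dot e e -> 0 <= dot q e -> 0 <= dot d e ->
  0 <= cross q e * cross d e -> dseg q e <= dseg (padd q d) e.
Proof.
  intros HE H1 H2 H3. apply sq_le; try apply dseg_ge0.
  assert (Hc: cross (padd q d) e = cross q e + cross d e) by (unfold cross, padd; simpl; ring).
  assert (Hd: dot (padd q d) e = dot q e + dot d e) by (unfold dot, padd; simpl; ring).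
  destruct (Rle_dec (dot q e) (dot e e)).
  - apply Rmult_le_reg_l with (dot e e); auto.
    rewrite dseg_cross_mid by lra.
    eapply Rle_trans; [|apply dseg_cross_lower; auto]. rewrite Hc. nra.
  - rewrite !dseg_far by lra.
    assert (Hid: dot e e * (fst d * (fst q - fst e) + snd d * (snd q - snd e))
                 = dot d e * (dot q e - dot e e) + cross d e * cross q e)
      by (unfold dot, cross; ring).
    assert (0 <= fst d * (fst q - fst e) + snd d * (snd q - snd e)).
    { apply Rmult_le_reg_l with (dot e e); auto. rewrite Rmult_0_r, Hid. nra. }
    unfold padd; simpl. nra.
Qed.


Lemma Dnear X0 Y0 p1 p2 e : 0 <= X0 -> 0 <= Y0 -> 0 <= fst e -> 0 <= snd e -> 0 < dot e e ->
  fst p1 = X0 -> Y0 <= snd p1 -> snd p2 = Y0 -> X0 <= fst p2 ->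
  dseg (X0, Y0) e <= Rmax (dseg p1 e) (dseg p2 e).
Proof.
  intros. destruct p1 as [a1 b1], p2 as [a2 b2]; simpl in *; subst.
  assert (Hce: 0 <= dot (X0,Y0) e) by (unfold dot; simpl; nra).
  destruct (Rle_dec 0 (cross (X0,Y0) e)).
  - eapply Rle_trans; [|apply Rmax_r].
    replace (a2, Y0) with (padd (X0,Y0) (a2 - X0, 0)) by (unfold padd; simpl; f_equal; ring).
    apply mono; auto.
    + unfold dot; simpl; nra.
    + apply Rmult_le_pos; auto. unfold cross; simpl. nra.
  - eapply Rle_trans; [|apply Rmax_l].
    replace (X0, b1) with (padd (X0,Y0) (0, b1 - Y0)) by (unfold padd; simpl; f_equal; ring).
    apply mono; auto.
    + unfold dot; simpl; nra.
    + replace (cross (X0, Y0) e * cross (0, b1 - Y0) e) with ((- cross (X0, Y0) e) * ((b1 - Y0) * fst e)) by (unfold cross; simpl; ring). apply Rmult_le_pos; [lra|nra].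
Qed.

Lemma Dfar X1 Y1 p1 p2 e : 0 <= X1 -> 0 <= Y1 -> 0 <= fst e -> 0 <= snd e -> 0 < dot e e ->
  pnorm (X1, Y1) <= pnorm e ->
  fst p1 = X1 -> 0 <= snd p1 <= Y1 -> snd p2 = Y1 -> 0 <= fst p2 <= X1 ->
  dseg (X1, Y1) e <= Rmax (dseg p1 e) (dseg p2 e).
Proof.
  intros H1 H2 H3 H4 HE Hn. intros. apply pnorm_le_inv in Hn. simpl in Hn.
  destruct p1 as [a1 b1], p2 as [a2 b2]; simpl in *; subst.
  assert (Hd0: 0 <= dot (X1,Y1) e) by (unfold dot; simpl; nra).
  assert (Hd1: dot (X1,Y1) e <= dot e e).
  { assert (dot (X1,Y1) e * dot (X1,Y1) e <= dot e e * dot e e).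
    { apply Rle_trans with ((X1*X1+Y1*Y1) * dot e e).
      - unfold dot; simpl. pose proof (Rle_0_sqr (X1 * snd e - Y1 * fst e)). unfold Rsqr in *. nra.
      - apply Rmult_le_compat_r; [lra|]. unfold dot; lra. }
    nra. }
  assert (Hm := dseg_cross_mid (X1,Y1) e HE (conj Hd0 Hd1)).
  destruct (Rle_dec 0 (cross (X1,Y1) e)).
  - eapply Rle_trans; [|apply Rmax_l]. apply sq_le; try apply dseg_ge0.
    apply Rmult_le_reg_l with (dot e e); auto. rewrite Hm.
    eapply Rle_trans; [|apply dseg_cross_lower; auto].
    assert (cross (X1, b1) e >= cross (X1, Y1) e) by (unfold cross; simpl; nra). nra.
  - eapply Rle_trans; [|apply Rmax_r]. apply sq_le; try apply dseg_ge0.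
    apply Rmult_le_reg_l with (dot e e); auto. rewrite Hm.
    eapply Rle_trans; [|apply dseg_cross_lower; auto].
    assert (cross (a2, Y1) e <= cross (X1, Y1) e) by (unfold cross; simpl; nra). nra.
Qed.


Lemma SL X1 Y1 p l e : 0 < dot e e -> 0 <= fst p <= X1 -> 0 <= snd p <= Y1 -> (0 < fst p \/ 0 < snd p) ->
  0 <= fst l <= X1 -> 0 <= snd l <= Y1 -> ((fst l = X1 /\ 0 < X1) \/ (snd l = Y1 /\ 0 < Y1)) ->
  0 <= cross l p -> 0 <= cross p (X1,Y1) -> dseg p e <= Rmax (dseg l e) (dseg (X1,Y1) e).
Proof.
  intros HE Hx Hy Hnz Hlx Hly Hfar Hc1 Hc2.
  destruct p as [x y], l as [lx ly]; simpl in *. unfold cross in *; simpl in *.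
  set (K := lx * Y1 - ly * X1).
  assert (Hid: K * (x*x + y*y) = (lx * y - ly * x) * (x * X1 + y * Y1) + (x * Y1 - y * X1) * (lx * x + ly * y))
    by (unfold K; ring).
  assert (HP: 0 < x * X1 + y * Y1) by (destruct Hnz; nra).
  assert (HQ: 0 <= lx * x + ly * y) by nra.
  assert (Hpp: 0 < x * x + y * y) by (destruct Hnz; nra).
  destruct (Rlt_dec 0 K) as [HK|HK].
  - assert (Hlx1: lx = X1).
    { destruct Hfar as [[? ?]|[? ?]]; auto. subst ly. exfalso. unfold K in HK. nra. }
    subst lx.
    set (al := (x * Y1 - y * X1) / K). set (be := (X1 * y - ly * x) / K).
    replace (x, y) with (al * fst (X1, ly) + be * fst (X1, Y1), al * snd (X1, ly) + be * snd (X1, Y1)).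
    2:{ unfold al, be; simpl. unfold K in *. f_equal; field; lra. }
    apply dseg_conv_max; auto.
    + unfold al, Rdiv. apply Rmult_le_pos; auto. left; apply Rinv_0_lt_compat; auto.
    + unfold be, Rdiv. apply Rmult_le_pos; auto. left; apply Rinv_0_lt_compat; auto.
    + unfold al, be. replace ((x * Y1 - y * X1) / K + (X1 * y - ly * x) / K) with
        ((x * Y1 - y * X1 + (X1 * y - ly * x)) / K) by (field; lra).
      apply Rmult_le_reg_r with K; auto. unfold Rdiv. rewrite Rmult_assoc, Rinv_l by lra.
      unfold K. nra.
  - assert (HK0: K = 0).
    { assert (0 <= K * (x*x+y*y)) by (rewrite Hid; apply Rplus_le_le_0_compat; apply Rmult_le_pos; lra). nra. }
    assert (Hcr: lx * y - ly * x = 0).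
    { assert ((lx * y - ly * x) * (x * X1 + y * Y1) = 0).
      { assert (0 <= (x * Y1 - y * X1) * (lx * x + ly * y)) by (apply Rmult_le_pos; lra).
        assert (0 <= (lx * y - ly * x) * (x * X1 + y * Y1)) by (apply Rmult_le_pos; lra).
        rewrite HK0 in Hid. lra. }
      apply Rmult_integral in H. destruct H; lra. }
    assert (Hll: 0 < lx * lx + ly * ly) by (destruct Hfar as [[? ?]|[? ?]]; nra).
    set (lam := (x * lx + y * ly) / (lx * lx + ly * ly)).
    assert (Hlam1: x * lx + y * ly <= lx * lx + ly * ly).
    { destruct Hfar as [[? ?]|[? ?]].
      - apply Rmult_le_reg_l with lx; [lra|].
        replace (lx * (x * lx + y * ly)) with (x * (lx * lx + ly * ly)) by (assert (E:lx*y = ly*x) by lra; replace (lx * (x * lx + y * ly)) with (x*lx*lx + ly*(lx*y)) by ring; rewrite E; ring).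
        apply Rmult_le_compat_r; lra.
      - apply Rmult_le_reg_l with ly; [lra|].
        replace (ly * (x * lx + y * ly)) with (y * (lx * lx + ly * ly)).
        2:{ assert (E:lx*y = ly*x) by lra. replace (ly * (x * lx + y * ly)) with (y*ly*ly + lx*(ly*x)) by ring. rewrite <- E; ring. }
        apply Rmult_le_compat_r; lra. }
    replace (x, y) with (scal lam (lx, ly)).
    2:{ assert (E:lx*y = ly*x) by lra. unfold scal, lam; simpl. f_equal.
        - replace ((x * lx + y * ly) / (lx * lx + ly * ly) * lx) with ((x * (lx * lx + ly * ly)) / (lx * lx + ly * ly)).
          + field; lra.
          + replace (x * (lx * lx + ly * ly)) with ((x * lx + y * ly) * lx). field; lra.
            replace ((x * lx + y * ly) * lx) with (x*lx*lx + ly*(lx*y)) by ring. rewrite E; ring.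
        - replace ((x * lx + y * ly) / (lx * lx + ly * ly) * ly) with ((y * (lx * lx + ly * ly)) / (lx * lx + ly * ly)).
          + field; lra.
          + replace (y * (lx * lx + ly * ly)) with ((x * lx + y * ly) * ly). field; lra.
            replace ((x * lx + y * ly) * ly) with (y*ly*ly + lx*(ly*x)) by ring. rewrite <- E; ring. }
    eapply Rle_trans; [|apply Rmax_l]. apply dseg_scal; auto. split.
    + unfold lam, Rdiv. apply Rmult_le_pos; [lra|]. left; apply Rinv_0_lt_compat; auto.
    + unfold lam. apply Rmult_le_reg_r with (lx * lx + ly * ly); auto. unfold Rdiv.
      rewrite Rmult_assoc, Rinv_l by lra. lra.
Qed.


Definition cbox X0 X1 Y0 Y1 (q : pt) := X0 <= fst q <= X1 /\ Y0 <= snd q <= Y1.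
Definition cbnd X0 X1 Y0 Y1 (q : pt) := cbox X0 X1 Y0 Y1 q /\
  (fst q = X0 \/ fst q = X1 \/ snd q = Y0 \/ snd q = Y1).
Definition cray (a q : pt) := exists r, 0 <= r /\ q = scal r a.

Ltac bnd := unfold cbox; simpl; split; [split; split; lra | first [left; lra | right; left; lra | right; right; left; lra | right; right; right; lra]].

Lemma cray_scal a q s : cray a q -> 0 <= s -> cray a (scal s q).
Proof. intros [r [Hr ->]] Hs. exists (s * r). split. nra. unfold scal; simpl; f_equal; ring. Qed.

Lemma pnorm_pos q : (0 < fst q \/ 0 < snd q) -> 0 < pnorm q.
Proof. intros. unfold pnorm. apply sqrt_lt_R0. destruct H; nra. Qed.

Lemma exit_far X0 X1 Y0 Y1 a l : 0 <= X0 -> 0 <= Y0 -> (0 < X0 \/ 0 < Y0) -> cray a l ->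
  cbox X0 X1 Y0 Y1 l -> (forall q, cray a q -> cbnd X0 X1 Y0 Y1 q -> pnorm q <= pnorm l) ->
  (fst l = X1 /\ 0 < X1) \/ (snd l = Y1 /\ 0 < Y1).
Proof.
  intros H0 H1 H2 Hr Hb Hm.
  assert (Hs: forall s, 0 <= s -> cbnd X0 X1 Y0 Y1 (scal s l) -> s <= 1).
  { intros s Hs0 Hq. specialize (Hm _ (cray_scal _ _ _ Hr Hs0) Hq). rewrite pnorm_scal in Hm by auto.
    assert (0 < pnorm l) by (apply pnorm_pos; destruct Hb; lra). nra. }
  destruct l as [x y]; unfold cbox, cbnd, scal in *; simpl in *.
  destruct (Req_dec x 0) as [Hx|Hx].
  - subst x. assert (Hy: 0 < y) by lra.
    assert (Y1 / y <= 1).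
    { apply Hs. unfold Rdiv; apply Rmult_le_pos; [lra|left; apply Rinv_0_lt_compat; lra].
      replace (Y1 / y * 0) with 0 by ring. replace (Y1 / y * y) with Y1 by (field; lra). bnd. }
    right. apply Rmult_le_compat_r with (r := y) in H; [|lra].
    replace (Y1 / y * y) with Y1 in H by (field; lra). lra.
  - destruct (Req_dec y 0) as [Hy|Hy].
    + subst y. assert (Hx': 0 < x) by lra.
      assert (X1 / x <= 1).
      { apply Hs. unfold Rdiv; apply Rmult_le_pos; [lra|left; apply Rinv_0_lt_compat; lra].
        replace (X1 / x * 0) with 0 by ring. replace (X1 / x * x) with X1 by (field; lra). bnd. }
      left. apply Rmult_le_compat_r with (r := x) in H; [|lra].
      replace (X1 / x * x) with X1 in H by (field; lra). lra.
    + assert (Hx': 0 < x) by lra. assert (Hy': 0 < y) by lra.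
      destruct (Rle_dec (X1 * y) (Y1 * x)).
      * assert (X1 / x <= 1).
        { apply Hs. unfold Rdiv; apply Rmult_le_pos; [lra|left; apply Rinv_0_lt_compat; lra].
          replace (X1 / x * x) with X1 by (field; lra).
          assert (y <= X1 / x * y <= Y1).
          { split.
            - apply Rmult_le_reg_l with x; auto. replace (x * (X1 / x * y)) with (X1 * y) by (field; lra). nra.
            - apply Rmult_le_reg_l with x; auto. replace (x * (X1 / x * y)) with (X1 * y) by (field; lra). nra. }
          bnd. }
        left. apply Rmult_le_compat_r with (r := x) in H; [|lra].
        replace (X1 / x * x) with X1 in H by (field; lra). lra.
      * assert (Y1 / y <= 1).
        { apply Hs. unfold Rdiv; apply Rmult_le_pos; [lra|left; apply Rinv_0_lt_compat; lra].
          replace (Y1 / y * y) with Y1 by (field; lra).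
          assert (x <= Y1 / y * x <= X1).
          { split.
            - apply Rmult_le_reg_l with y; auto. replace (y * (Y1 / y * x)) with (Y1 * x) by (field; lra). nra.
            - apply Rmult_le_reg_l with y; auto. replace (y * (Y1 / y * x)) with (Y1 * x) by (field; lra). nra. }
          bnd. }
        right. apply Rmult_le_compat_r with (r := y) in H; [|lra].
        replace (Y1 / y * y) with Y1 in H by (field; lra). lra.
Qed.

Lemma exit_near X0 X1 Y0 Y1 pa l e : 0 <= X0 -> 0 <= Y0 -> 0 < dot e e ->
  cbox X0 X1 Y0 Y1 pa -> (0 < fst pa \/ 0 < snd pa) -> cray pa l ->
  (forall q, cray pa q -> cbnd X0 X1 Y0 Y1 q -> pnorm l <= pnorm q) ->
  dseg l e <= dseg pa e.
Proof.
  intros H0 H1 HE Hb Hnz [r [Hr ->]] Hm.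
  assert (Hp: 0 < pnorm pa) by (apply pnorm_pos; auto).
  assert (Ht: exists t, 0 <= t <= 1 /\ cbnd X0 X1 Y0 Y1 (scal t pa)).
  { destruct pa as [x y]; unfold cbox, cbnd, scal in *; simpl in *.
    destruct (Req_dec x 0) as [Hx|Hx].
    - subst x. assert (Hy: 0 < y) by lra. exists (Y0 / y). split.
      + split. unfold Rdiv; apply Rmult_le_pos; [lra|left; apply Rinv_0_lt_compat; lra].
        apply Rmult_le_reg_r with y; auto. replace (Y0 / y * y) with Y0 by (field; lra). lra.
      + replace (Y0 / y * 0) with 0 by ring. replace (Y0 / y * y) with Y0 by (field; lra). bnd.
    - destruct (Req_dec y 0) as [Hy|Hy].
      + subst y. assert (Hx': 0 < x) by lra. exists (X0 / x). split.
        * split. unfold Rdiv; apply Rmult_le_pos; [lra|left; apply Rinv_0_lt_compat; lra].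
          apply Rmult_le_reg_r with x; auto. replace (X0 / x * x) with X0 by (field; lra). lra.
        * replace (X0 / x * 0) with 0 by ring. replace (X0 / x * x) with X0 by (field; lra). bnd.
      + assert (Hx': 0 < x) by lra. assert (Hy': 0 < y) by lra.
        destruct (Rle_dec (Y0 * x) (X0 * y)).
        * exists (X0 / x). split.
          -- split. unfold Rdiv; apply Rmult_le_pos; [lra|left; apply Rinv_0_lt_compat; lra].
             apply Rmult_le_reg_r with x; auto. replace (X0 / x * x) with X0 by (field; lra). lra.
          -- replace (X0 / x * x) with X0 by (field; lra).
             assert (Y0 <= X0 / x * y <= y).
             { split.
               - apply Rmult_le_reg_l with x; auto. replace (x * (X0 / x * y)) with (X0 * y) by (field; lra). nra.
               - apply Rmult_le_reg_l with x; auto. replace (x * (X0 / x * y)) with (X0 * y) by (field; lra). nra. }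
             bnd.
        * exists (Y0 / y). split.
          -- split. unfold Rdiv; apply Rmult_le_pos; [lra|left; apply Rinv_0_lt_compat; lra].
             apply Rmult_le_reg_r with y; auto. replace (Y0 / y * y) with Y0 by (field; lra). lra.
          -- replace (Y0 / y * y) with Y0 by (field; lra).
             assert (X0 <= Y0 / y * x <= x).
             { split.
               - apply Rmult_le_reg_l with y; auto. replace (y * (Y0 / y * x)) with (Y0 * x) by (field; lra). nra.
               - apply Rmult_le_reg_l with y; auto. replace (y * (Y0 / y * x)) with (Y0 * x) by (field; lra). nra. }
             bnd. }
  destruct Ht as [t [Ht Hq]].
  assert (Hray: cray pa (scal t pa)) by (exists t; split; [lra|auto]).
  specialize (Hm _ Hray Hq). rewrite !pnorm_scal in Hm by lra.
  assert (r <= 1) by nra.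
  apply dseg_scal; auto.
Qed.


Definition sw (q : pt) : pt := (snd q, fst q).

Lemma dseg_sw q e : dseg (sw q) (sw e) = dseg q e.
Proof.
  unfold dseg, sw. replace (dot (snd q, fst q) (snd e, fst e)) with (dot q e) by (unfold dot; simpl; ring).
  replace (dot (snd e, fst e) (snd e, fst e)) with (dot e e) by (unfold dot; simpl; ring).
  unfold edist, pnorm; simpl. f_equal; ring.
Qed.

Lemma Ucore X0 X1 Y0 Y1 pa pb l2 u2 p e :
  0 <= X0 -> 0 <= Y0 -> (0 < X0 \/ 0 < Y0) -> 0 < dot e e ->
  cbox X0 X1 Y0 Y1 p ->
  cray pa l2 -> cbox X0 X1 Y0 Y1 l2 -> (forall q, cray pa q -> cbnd X0 X1 Y0 Y1 q -> pnorm q <= pnorm l2) ->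
  cray pb u2 -> cbox X0 X1 Y0 Y1 u2 -> (forall q, cray pb q -> cbnd X0 X1 Y0 Y1 q -> pnorm q <= pnorm u2) ->
  0 <= cross pa p -> 0 <= cross p pb ->
  dseg p e <= Rmax (dseg l2 e) (Rmax (dseg (X1, Y1) e) (dseg u2 e)).
Proof.
  intros H0 H1 H2 HE Hp Hl Hlb Hlm Hu Hub Hum Hc1 Hc2.
  pose proof (exit_far _ _ _ _ _ _ H0 H1 H2 Hl Hlb Hlm) as Fl.
  pose proof (exit_far _ _ _ _ _ _ H0 H1 H2 Hu Hub Hum) as Fu.
  assert (Cl: 0 <= cross l2 p).
  { destruct Hl as [r [Hr ->]]. unfold cross, scal in *; simpl in *. nra. }
  assert (Cu: 0 <= cross p u2).
  { destruct Hu as [r [Hr ->]]. unfold cross, scal in *; simpl in *. nra. }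
  unfold cbox in *.
  assert (Hnz: 0 < fst p \/ 0 < snd p) by (destruct H2; [left|right]; lra).
  destruct (Rle_dec 0 (cross p (X1, Y1))).
  - assert (H := SL X1 Y1 p l2 e HE ltac:(lra) ltac:(lra) Hnz ltac:(lra) ltac:(lra) Fl Cl r).
    revert H. generalize (dseg p e) (dseg l2 e) (dseg (X1, Y1) e) (dseg u2 e).
    intros; unfold Rmax in *; repeat destruct Rle_dec; lra.
  - assert (H := SL Y1 X1 (sw p) (sw u2) (sw e)).
    rewrite !dseg_sw in H. replace (Y1, X1) with (sw (X1, Y1)) in H by reflexivity.
    rewrite dseg_sw in H.
    assert (HE': 0 < dot (sw e) (sw e)) by (unfold dot, sw in *; simpl; lra).
    unfold sw, cross in *; simpl in *.
    assert (H' := H HE' ltac:(lra) ltac:(lra) ltac:(tauto) ltac:(lra) ltac:(lra) ltac:(tauto) ltac:(lra) ltac:(lra)).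
    revert H'. generalize (dseg p e) (dseg l2 e) (dseg (X1, Y1) e) (dseg u2 e).
    intros; unfold Rmax in *; repeat destruct Rle_dec; lra.
Qed.


Lemma fold_max_prop t a : (fold_left Rmax t a = a \/ In (fold_left Rmax t a) t) /\
  a <= fold_left Rmax t a /\ (forall x, In x t -> x <= fold_left Rmax t a).
Proof.
  revert a; induction t as [|b t IH]; intros a; simpl.
  - split; [left; auto|]. split; [lra|]. intros x [].
  - destruct (IH (Rmax a b)) as [H1 [H2 H3]]. split; [|split].
    + destruct H1 as [H1|H1]; [|right; right; auto].
      rewrite H1. unfold Rmax; destruct Rle_dec; [right; left; auto|left; auto].
    + eapply Rle_trans; [apply Rmax_l|eauto].
    + intros x [<-|Hx]; auto. eapply Rle_trans; [apply Rmax_r|eauto].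
Qed.

Lemma fold_min_prop t a : (fold_left Rmin t a = a \/ In (fold_left Rmin t a) t) /\
  fold_left Rmin t a <= a /\ (forall x, In x t -> fold_left Rmin t a <= x).
Proof.
  revert a; induction t as [|b t IH]; intros a; simpl.
  - split; [left; auto|]. split; [lra|]. intros x [].
  - destruct (IH (Rmin a b)) as [H1 [H2 H3]]. split; [|split].
    + destruct H1 as [H1|H1]; [|right; right; auto].
      rewrite H1. unfold Rmin; destruct Rle_dec; [left; auto|right; left; auto].
    + eapply Rle_trans; [eauto|apply Rmin_l].
    + intros x [<-|Hx]; auto. eapply Rle_trans; [eauto|apply Rmin_r].
Qed.

Lemma max_list_ge l x : In x l -> x <= max_list l.
Proof.
  destruct l as [|a t]; [intros []|]. simpl. destruct (fold_max_prop t a) as [_ [H2 H3]].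
  intros [<-|Hx]; auto.
Qed.

Lemma max_list_in l : l <> nil -> In (max_list l) l.
Proof.
  destruct l as [|a t]; [tauto|]. intros _. simpl. destruct (fold_max_prop t a) as [[H|H] _]; auto.
Qed.

Lemma max_list_le l M : l <> nil -> (forall x, In x l -> x <= M) -> max_list l <= M.
Proof. intros Hl H. apply H, max_list_in, Hl. Qed.

Lemma min_list_le l x : In x l -> min_list l <= x.
Proof.
  destruct l as [|a t]; [intros []|]. simpl. destruct (fold_min_prop t a) as [_ [H2 H3]].
  intros [<-|Hx]; auto.
Qed.

Lemma min_list_in l : l <> nil -> In (min_list l) l.
Proof.
  destruct l as [|a t]; [tauto|]. intros _. simpl. destruct (fold_min_prop t a) as [[H|H] _]; auto.
Qed.

Definition RB X0 X1 Y0 Y1 (a l1 l2 : pt) :=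
  cray a l1 /\ cbnd X0 X1 Y0 Y1 l1 /\ cray a l2 /\ cbnd X0 X1 Y0 Y1 l2 /\
  (forall q, cray a q -> cbnd X0 X1 Y0 Y1 q -> pnorm l1 <= pnorm q <= pnorm l2).

Lemma core (P : list pt) X0 X1 Y0 Y1 e pa pb l1 l2 u1 u2 :
  0 <= X0 -> 0 <= Y0 -> (0 < X0 \/ 0 < Y0) -> 0 <= fst e -> 0 <= snd e -> 0 < dot e e ->
  (forall p, In p P -> cbox X0 X1 Y0 Y1 p) ->
  (exists p, In p P /\ fst p = X0) -> (exists p, In p P /\ fst p = X1) ->
  (exists p, In p P /\ snd p = Y0) -> (exists p, In p P /\ snd p = Y1) ->
  In pa P -> In pb P ->
  (forall p, In p P -> 0 <= cross pa p /\ 0 <= cross p pb) ->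
  RB X0 X1 Y0 Y1 pa l1 l2 -> RB X0 X1 Y0 Y1 pb u1 u2 ->
  let dm := max_list (map (fun p => dseg p e) P) in
  Rmin (dseg l1 e) (dseg l2 e) <= dm /\ Rmin (dseg u1 e) (dseg u2 e) <= dm /\
  dseg (X0, Y0) e <= dm /\ (pnorm (X1, Y1) <= pnorm e -> dseg (X1, Y1) e <= dm) /\
  dm <= Rmax (dseg l2 e) (Rmax (dseg (X1, Y1) e) (dseg u2 e)).
Proof.
  intros H0 H1 H2 He1 He2 HE Hbox [q0 [Hq0 Eq0]] [q1 [Hq1 Eq1]] [r0 [Hr0 Er0]] [r1 [Hr1 Er1]]
    Hpa Hpb Hw [Hl1 [Bl1 [Hl2 [Bl2 Ml]]]] [Hu1 [Bu1 [Hu2 [Bu2 Mu]]]] dm.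
  assert (Hin: forall p, In p P -> dseg p e <= dm).
  { intros p Hp. apply max_list_ge. apply in_map_iff. exists p; auto. }
  assert (Hnz: forall p, In p P -> 0 < fst p \/ 0 < snd p).
  { intros p Hp. destruct (Hbox p Hp) as [? ?]. destruct H2; [left|right]; lra. }
  split; [|split; [|split; [|split]]].
  - eapply Rle_trans; [apply Rmin_l|]. eapply Rle_trans; [|apply (Hin pa Hpa)].
    apply (exit_near X0 X1 Y0 Y1); auto. intros q Hq Hb. apply Ml; auto.
  - eapply Rle_trans; [apply Rmin_l|]. eapply Rle_trans; [|apply (Hin pb Hpb)].
    apply (exit_near X0 X1 Y0 Y1); auto. intros q Hq Hb. apply Mu; auto.
  - eapply Rle_trans. apply (Dnear X0 Y0 q0 r0 e); auto.
    + destruct (Hbox q0 Hq0); lra.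
    + destruct (Hbox r0 Hr0); lra.
    + pose proof (Hin q0 Hq0); pose proof (Hin r0 Hr0). unfold Rmax; destruct Rle_dec; lra.
  - intros Hn. eapply Rle_trans. apply (Dfar X1 Y1 q1 r1 e); auto.
    + destruct (Hbox q1 Hq1); lra.
    + destruct (Hbox q1 Hq1); lra.
    + destruct (Hbox q1 Hq1); lra.
    + destruct (Hbox r1 Hr1); lra.
    + pose proof (Hin q1 Hq1); pose proof (Hin r1 Hr1). unfold Rmax; destruct Rle_dec; lra.
  - apply max_list_le.
    + destruct P; [destruct Hpa|]. simpl; discriminate.
    + intros x Hx. apply in_map_iff in Hx. destruct Hx as [p [<- Hp]].
      destruct (Hw p Hp).
      apply (Ucore X0 X1 Y0 Y1 pa pb); auto.
      * destruct Bl2; auto.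
      * intros q Hq Hb; apply Ml; auto.
      * destruct Bu2; auto.
      * intros q Hq Hb; apply Mu; auto.
Qed.


Lemma pnorm_pos' p : p <> origin -> 0 < pnorm p.
Proof.
  intros H. unfold pnorm. apply sqrt_lt_R0. destruct p as [x y]; simpl.
  destruct (Req_dec x 0); destruct (Req_dec y 0); subst; try (exfalso; apply H; reflexivity); nra.
Qed.

Lemma polar p : p <> origin -> cos (theta p) = fst p / pnorm p /\ sin (theta p) = snd p / pnorm p.
Proof.
  intros Hp. pose proof (pnorm_pos' p Hp) as HN. pose proof (pnorm_sq p) as HS.
  set (N := pnorm p) in *. destruct p as [x y]; simpl in *.
  assert (Hc: -1 <= x / N <= 1).
  { assert (x * x <= N * N) by nra. split.
    - apply Rmult_le_reg_r with N; auto. unfold Rdiv; rewrite Rmult_assoc, Rinv_l by lra. nra.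
    - apply Rmult_le_reg_r with N; auto. unfold Rdiv; rewrite Rmult_assoc, Rinv_l by lra. nra. }
  assert (H1: 1 - (x / N)² = (y / N) * (y / N)).
  { unfold Rsqr. replace (y / N * (y / N)) with ((y*y)/(N*N)) by (field; lra). replace (y*y) with (N*N - x*x) by lra. field; lra. }
  unfold theta; simpl. fold N. destruct (Rle_dec 0 y).
  - rewrite cos_acos, sin_acos by auto. split; auto. rewrite H1. apply sqrt_square.
    unfold Rdiv; apply Rmult_le_pos; auto. left; apply Rinv_0_lt_compat; auto.
  - rewrite cos_minus, sin_minus, cos_2PI, sin_2PI, cos_acos, sin_acos by auto.
    rewrite H1. replace (y / N * (y / N)) with ((- (y / N)) * (- (y / N))) by ring.
    rewrite sqrt_square. split; ring.
    unfold Rdiv. assert (0 < / N) by (apply Rinv_0_lt_compat; auto). nra.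
Qed.

Lemma polar_eq p : p <> origin -> fst p = pnorm p * cos (theta p) /\ snd p = pnorm p * sin (theta p).
Proof.
  intros Hp. destruct (polar p Hp) as [H1 H2]. pose proof (pnorm_pos' p Hp).
  rewrite H1, H2. split; field; lra.
Qed.

Lemma theta_range k q : (1 <= k <= 4)%nat -> in_quadrant k q -> 0 <= theta q < 2 * PI.
Proof.
  intros Hk [_ [H1 H2]]. pose proof PI_RGT_0.
  assert (0 <= INR (k - 1)) by apply pos_INR.
  assert (INR k <= 4) by (replace 4 with (INR 4) by (simpl; ring); apply le_INR; lia).
  split; nra.
Qed.

Lemma quad_bounds k q : in_quadrant k q ->
  INR (k - 1) * (PI / 2) <= theta q < INR k * (PI / 2).
Proof. intros [_ H]; exact H. Qed.

Lemma orient k p q : (1 <= k <= 4)%nat -> in_quadrant k p -> in_quadrant k q -> theta p <= theta q ->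
  0 <= fst p * snd q - snd p * fst q.
Proof.
  intros Hk Hp Hq Hle.
  destruct (polar_eq p (proj1 Hp)) as [Hp1 Hp2]. destruct (polar_eq q (proj1 Hq)) as [Hq1 Hq2].
  rewrite Hp1, Hp2, Hq1, Hq2.
  replace (pnorm p * cos (theta p) * (pnorm q * sin (theta q)) - pnorm p * sin (theta p) * (pnorm q * cos (theta q)))
    with (pnorm p * pnorm q * sin (theta q - theta p)) by (rewrite sin_minus; ring).
  apply Rmult_le_pos. apply Rmult_le_pos; apply pnorm_ge0.
  apply sin_ge_0. lra.
  destruct (quad_bounds k p Hp). destruct (quad_bounds k q Hq). pose proof PI_RGT_0.
  assert (INR k = INR (k - 1) + 1).
  { replace k with (S (k - 1)) at 1 by lia. rewrite S_INR. ring. }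
  nra.
Qed.


Lemma quad1 q : in_quadrant 1 q -> 0 < fst q /\ 0 <= snd q.
Proof.
  intros Hq. destruct (polar_eq q (proj1 Hq)) as [E1 E2]. pose proof (pnorm_pos' q (proj1 Hq)).
  destruct Hq as [_ [H1 H2]]. simpl in H1, H2. pose proof PI_RGT_0.
  rewrite E1, E2. split.
  - apply Rmult_lt_0_compat; auto. apply cos_gt_0; lra.
  - apply Rmult_le_pos; [lra|]. apply sin_ge_0; lra.
Qed.

Lemma quad2 q : in_quadrant 2 q -> fst q <= 0 /\ 0 < snd q.
Proof.
  intros Hq. destruct (polar_eq q (proj1 Hq)) as [E1 E2]. pose proof (pnorm_pos' q (proj1 Hq)).
  destruct Hq as [_ [H1 H2]]. simpl in H1, H2. pose proof PI_RGT_0.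
  rewrite E1, E2. split.
  - assert (cos (theta q) <= 0) by (apply cos_le_0; lra). nra.
  - apply Rmult_lt_0_compat; auto. apply sin_gt_0; lra.
Qed.

Lemma quad3 q : in_quadrant 3 q -> fst q < 0 /\ snd q <= 0.
Proof.
  intros Hq. destruct (polar_eq q (proj1 Hq)) as [E1 E2]. pose proof (pnorm_pos' q (proj1 Hq)).
  destruct Hq as [_ [H1 H2]]. simpl in H1, H2. pose proof PI_RGT_0.
  rewrite E1, E2. split.
  - assert (cos (theta q) < 0) by (apply cos_lt_0; lra). nra.
  - assert (sin (theta q) <= 0) by (apply sin_le_0; lra). nra.
Qed.

Lemma quad4 q : in_quadrant 4 q -> 0 <= fst q /\ snd q < 0.
Proof.
  intros Hq. destruct (polar_eq q (proj1 Hq)) as [E1 E2]. pose proof (pnorm_pos' q (proj1 Hq)).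
  destruct Hq as [_ [H1 H2]]. simpl in H1, H2. pose proof PI_RGT_0.
  rewrite E1, E2. split.
  - assert (cos (theta q) = cos (theta q - 2 * PI)) by (rewrite cos_minus, cos_2PI, sin_2PI; ring).
    assert (0 <= cos (theta q - 2 * PI)) by (apply cos_ge_0; lra). nra.
  - assert (sin (theta q) < 0) by (apply sin_lt_0; lra). nra.
Qed.

Lemma on_ray_iff p q : p <> origin -> (on_ray (theta p) q <-> exists r, 0 <= r /\ q = scal r p).
Proof.
  intros Hp. destruct (polar p Hp) as [C S]. pose proof (pnorm_pos' p Hp).
  destruct (polar_eq p Hp) as [E1 E2]. split.
  - intros [r [Hr ->]]. exists (r / pnorm p). split.
    + unfold Rdiv; apply Rmult_le_pos; auto. left; apply Rinv_0_lt_compat; auto.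
    + unfold scal. rewrite C, S. f_equal; field; lra.
  - intros [r [Hr ->]]. exists (r * pnorm p). split. nra.
    unfold scal. rewrite E1, E2. f_equal; ring.
Qed.

Definition rho (s1 s2 : R) (q : pt) : pt := (s1 * fst q, s2 * snd q).

Lemma rho_inv s1 s2 q : s1 * s1 = 1 -> s2 * s2 = 1 -> rho s1 s2 (rho s1 s2 q) = q.
Proof. intros. destruct q; unfold rho; simpl. f_equal; [replace (s1 * (s1 * r)) with ((s1*s1)*r) by ring | replace (s2 * (s2 * r0)) with ((s2*s2)*r0) by ring]; rewrite ?H, ?H0; ring. Qed.

Lemma pnorm_rho s1 s2 q : s1 * s1 = 1 -> s2 * s2 = 1 -> pnorm (rho s1 s2 q) = pnorm q.
Proof. intros. unfold pnorm, rho; simpl. f_equal.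
  replace (s1 * fst q * (s1 * fst q) + s2 * snd q * (s2 * snd q)) with ((s1*s1) * (fst q * fst q) + (s2*s2) * (snd q * snd q)) by ring.
  rewrite H, H0; ring. Qed.

Lemma dot_rho s1 s2 a b : s1 * s1 = 1 -> s2 * s2 = 1 -> dot (rho s1 s2 a) (rho s1 s2 b) = dot a b.
Proof. intros. unfold dot, rho; simpl.
  replace (s1 * fst a * (s1 * fst b) + s2 * snd a * (s2 * snd b)) with ((s1*s1) * (fst a * fst b) + (s2*s2) * (snd a * snd b)) by ring.
  rewrite H, H0; ring. Qed.

Lemma cross_rho s1 s2 a b : cross (rho s1 s2 a) (rho s1 s2 b) = s1 * s2 * cross a b.
Proof. unfold cross, rho; simpl. ring. Qed.

Lemma scal_rho s1 s2 r p : rho s1 s2 (scal r p) = scal r (rho s1 s2 p).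
Proof. unfold rho, scal; simpl. f_equal; ring. Qed.

Lemma dseg_rho s1 s2 q e : s1 * s1 = 1 -> s2 * s2 = 1 -> dseg (rho s1 s2 q) (rho s1 s2 e) = dseg q e.
Proof.
  intros. unfold dseg. rewrite !dot_rho by auto.
  unfold edist, pnorm, rho; simpl. f_equal.
  set (t := clamp01 (dot q e / dot e e)).
  replace ((s1 * fst q - t * (s1 * fst e)) * (s1 * fst q - t * (s1 * fst e)) +
   (s2 * snd q - t * (s2 * snd e)) * (s2 * snd q - t * (s2 * snd e))) with
   ((s1*s1) * ((fst q - t * fst e) * (fst q - t * fst e)) + (s2*s2) * ((snd q - t * snd e) * (snd q - t * snd e))) by ring.
  rewrite H, H0; ring.
Qed.

Lemma edist_origin q : edist origin q = pnorm q.
Proof. unfold edist, pnorm, origin; simpl. f_equal. ring. Qed.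


Lemma coord1 (l : list R) (s : R) : l <> nil -> (s = 1 \/ s = -1) -> (forall x, In x l -> 0 <= s * x) ->
  let n := s * near_coord (min_list l) (max_list l) in
  let f := s * far_coord (min_list l) (max_list l) in
  (forall z, min_list l <= z <= max_list l <-> n <= s * z <= f) /\
  (forall z, (z = min_list l \/ z = max_list l) <-> (s * z = n \/ s * z = f)) /\
  (exists x, In x l /\ s * x = n) /\ (exists x, In x l /\ s * x = f) /\ 0 <= n.
Proof.
  intros Hl Hs Hpos n f.
  pose proof (min_list_in l Hl) as Hm. pose proof (max_list_in l Hl) as HM.
  pose proof (min_list_le l _ HM) as HmM.
  pose proof (Hpos _ Hm). pose proof (Hpos _ HM).
  set (m := min_list l) in *. set (M := max_list l) in *.
  assert (K: (n = m /\ f = M /\ s = 1) \/ (n = - M /\ f = - m /\ s = -1)).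
  { unfold n, f, near_coord, far_coord. destruct Hs; subst s.
    - rewrite (Rabs_pos_eq m), (Rabs_pos_eq M) by lra. destruct Rle_dec; [left; lra|lra].
    - rewrite (Rabs_left1 m), (Rabs_left1 M) by lra. destruct Rle_dec; right; lra. }
  destruct K as [[-> [-> ->]]|[-> [-> ->]]].
  - split; [|split; [|split; [|split]]].
    + intros z; split; intros [? ?]; split; lra.
    + intros z; split; intros [?|?]; [left|right|left|right]; lra.
    + exists m; split; auto; lra.
    + exists M; split; auto; lra.
    + lra.
  - split; [|split; [|split; [|split]]].
    + intros z; split; intros [? ?]; split; lra.
    + intros z; split; intros [?|?]; [right|left|right|left]; lra.
    + exists M; split; auto; lra.
    + exists m; split; auto; lra.
    + lra.
Qed.


Lemma RB_transfer s1 s2 P pa l1 l2 X0 X1 Y0 Y1 :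
  s1 * s1 = 1 -> s2 * s2 = 1 -> pa <> origin ->
  (forall q, on_box_boundary P q <-> cbnd X0 X1 Y0 Y1 (rho s1 s2 q)) ->
  ray_box_intersections P (theta pa) l1 l2 ->
  RB X0 X1 Y0 Y1 (rho s1 s2 pa) (rho s1 s2 l1) (rho s1 s2 l2).
Proof.
  intros S1 S2 Hpa Hb [R1 [B1 [R2 [B2 [_ M]]]]].
  assert (Hr: forall q, on_ray (theta pa) q <-> cray (rho s1 s2 pa) (rho s1 s2 q)).
  { intros q. rewrite on_ray_iff by auto. split.
    - intros [r [Hr ->]]. exists r. split; auto. apply scal_rho.
    - intros [r [Hr Hq]]. exists r. split; auto.
      rewrite <- (rho_inv s1 s2 q S1 S2), Hq, scal_rho, rho_inv; auto. }
  split; [apply Hr; auto|]. split; [apply Hb; auto|]. split; [apply Hr; auto|]. split; [apply Hb; auto|].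
  intros q Hq Hbq.
  assert (Eq: rho s1 s2 (rho s1 s2 q) = q) by (apply rho_inv; auto).
  assert (H1: on_ray (theta pa) (rho s1 s2 q)) by (apply Hr; rewrite Eq; auto).
  assert (H2: on_box_boundary P (rho s1 s2 q)) by (apply Hb; rewrite Eq; auto).
  specialize (M _ H1 H2). rewrite pnorm_rho in M by auto. rewrite !pnorm_rho by auto. exact M.
Qed.

Lemma assembly (k : nat) s1 s2 (P : list pt) (e l1 l2 u1 u2 : pt) :
  (1 <= k <= 4)%nat -> (s1 = 1 \/ s1 = -1) -> (s2 = 1 \/ s2 = -1) ->
  (forall q, in_quadrant k q -> 0 <= s1 * fst q /\ 0 <= s2 * snd q) ->
  ((forall q, in_quadrant k q -> 0 < s1 * fst q) \/ (forall q, in_quadrant k q -> 0 < s2 * snd q)) ->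
  P <> nil ->
  (forall p, In p P -> in_quadrant k p) ->
  in_quadrant k e ->
  ray_box_intersections P (theta_lb P) l1 l2 ->
  ray_box_intersections P (theta_ub P) u1 u2 ->
  let dmax := max_list (map (fun p => dseg p e) P) in
  let D := if Rlt_dec (edist origin e) (edist origin (c_far P))
           then dseg (c_near P) e else dseg (c_far P) e in
  let dlb := Rmax (Rmin (dseg l1 e) (dseg l2 e))
               (Rmax (Rmin (dseg u1 e) (dseg u2 e)) D) in
  let dint := max_list (map (fun q => dseg q e) (l1 :: l2 :: u1 :: u2 :: nil)) in
  let dub := Rmax dint (dseg (c_far P) e) in
  dlb <= dmax /\ dmax <= dub.
Proof.
  intros Hk Hs1 Hs2 Hsg Hstr HPn HP He Hl Hu dmax D dlb dint dub.
  assert (S1: s1 * s1 = 1) by (destruct Hs1; subst; ring).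
  assert (S2: s2 * s2 = 1) by (destruct Hs2; subst; ring).
  assert (HPx: map fst P <> nil) by (destruct P; [tauto|discriminate]).
  assert (HPy: map snd P <> nil) by (destruct P; [tauto|discriminate]).
  assert (Px: forall x, In x (map fst P) -> 0 <= s1 * x).
  { intros x Hx. apply in_map_iff in Hx. destruct Hx as [p [<- Hp]]. apply Hsg, HP, Hp. }
  assert (Py: forall x, In x (map snd P) -> 0 <= s2 * x).
  { intros x Hx. apply in_map_iff in Hx. destruct Hx as [p [<- Hp]]. apply Hsg, HP, Hp. }
  pose proof (coord1 _ _ HPx Hs1 Px) as Cx. pose proof (coord1 _ _ HPy Hs2 Py) as Cy.
  cbv zeta in Cx, Cy.
  set (X0 := s1 * near_coord (min_list (map fst P)) (max_list (map fst P))) in *.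
  set (X1 := s1 * far_coord (min_list (map fst P)) (max_list (map fst P))) in *.
  set (Y0 := s2 * near_coord (min_list (map snd P)) (max_list (map snd P))) in *.
  set (Y1 := s2 * far_coord (min_list (map snd P)) (max_list (map snd P))) in *.
  destruct Cx as [Cx1 [Cx2 [[x0 [Hx0 Ex0]] [[x1 [Hx1 Ex1]] Cx5]]]].
  destruct Cy as [Cy1 [Cy2 [[y0 [Hy0 Ey0]] [[y1 [Hy1 Ey1]] Cy5]]]].
  set (rh := rho s1 s2).
  assert (Hbnd: forall q, on_box_boundary P q <-> cbnd X0 X1 Y0 Y1 (rh q)).
  { intros q. unfold on_box_boundary, in_box, cbnd, cbox, rh, rho, xmin, xmax, ymin, ymax; simpl.
    rewrite (Cx1 (fst q)), (Cy1 (snd q)). pose proof (Cx2 (fst q)). pose proof (Cy2 (snd q)). tauto. }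
  assert (Hth: map theta P <> nil) by (destruct P; [tauto|discriminate]).
  destruct (proj1 (in_map_iff _ _ _) (min_list_in _ Hth)) as [pa [Epa Hpa]].
  destruct (proj1 (in_map_iff _ _ _) (max_list_in _ Hth)) as [pb [Epb Hpb]].
  fold (theta_lb P) in Epa. fold (theta_ub P) in Epb.
  assert (Wa: forall p, In p P -> 0 <= cross pa p).
  { intros p Hp. apply (orient k); auto. rewrite Epa. apply min_list_le, in_map, Hp. }
  assert (Wb: forall p, In p P -> 0 <= cross p pb).
  { intros p Hp. apply (orient k); auto. rewrite Epb. apply max_list_ge, in_map, Hp. }
  rewrite <- Epa in Hl. rewrite <- Epb in Hu.
  pose proof (RB_transfer s1 s2 P pa l1 l2 X0 X1 Y0 Y1 S1 S2 (proj1 (HP pa Hpa)) Hbnd Hl) as RBl.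
  pose proof (RB_transfer s1 s2 P pb u1 u2 X0 X1 Y0 Y1 S1 S2 (proj1 (HP pb Hpb)) Hbnd Hu) as RBu.
  set (P' := map rh P). set (e' := rh e).
  assert (HX0: 0 < X0 \/ 0 < Y0).
  { destruct Hstr as [Hs|Hs]; [left|right].
    - apply in_map_iff in Hx0. destruct Hx0 as [p [<- Hp]]. rewrite <- Ex0. apply Hs, HP, Hp.
    - apply in_map_iff in Hy0. destruct Hy0 as [p [<- Hp]]. rewrite <- Ey0. apply Hs, HP, Hp. }
  assert (He1: 0 <= fst e' /\ 0 <= snd e') by (apply Hsg; auto).
  assert (HE: 0 < dot e' e').
  { unfold e', rh. rewrite dot_rho by auto. pose proof (pnorm_pos' e (proj1 He)).
    pose proof (pnorm_sq e). unfold dot. nra. }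
  assert (Hbox: forall p, In p P' -> cbox X0 X1 Y0 Y1 p).
  { intros p' Hp'. apply in_map_iff in Hp'. destruct Hp' as [p [<- Hp]].
    unfold cbox, rh, rho; simpl. split.
    - apply Cx1. split; [apply min_list_le|apply max_list_ge]; apply in_map; auto.
    - apply Cy1. split; [apply min_list_le|apply max_list_ge]; apply in_map; auto. }
  assert (A1: exists p, In p P' /\ fst p = X0).
  { apply in_map_iff in Hx0. destruct Hx0 as [p [<- Hp]]. exists (rh p). split; [apply in_map; auto|auto]. }
  assert (A2: exists p, In p P' /\ fst p = X1).
  { apply in_map_iff in Hx1. destruct Hx1 as [p [<- Hp]]. exists (rh p). split; [apply in_map; auto|auto]. }
  assert (A3: exists p, In p P' /\ snd p = Y0).
  { apply in_map_iff in Hy0. destruct Hy0 as [p [<- Hp]]. exists (rh p). split; [apply in_map; auto|auto]. }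
  assert (A4: exists p, In p P' /\ snd p = Y1).
  { apply in_map_iff in Hy1. destruct Hy1 as [p [<- Hp]]. exists (rh p). split; [apply in_map; auto|auto]. }
  assert (Hdm: max_list (map (fun p => dseg p e') P') = dmax).
  { unfold P', dmax. rewrite map_map. f_equal. apply map_ext. intros a. apply dseg_rho; auto. }
  assert (Hf: forall q, dseg (rh q) e' = dseg q e) by (intros; apply dseg_rho; auto).
  assert (Hcn: (X0, Y0) = rh (c_near P)) by reflexivity.
  assert (Hcf: (X1, Y1) = rh (c_far P)) by reflexivity.
  assert (Hne: pnorm e' = edist origin e) by (rewrite edist_origin; apply pnorm_rho; auto).
  assert (Hnf: pnorm (X1, Y1) = edist origin (c_far P)) by (rewrite edist_origin, Hcf; apply pnorm_rho; auto).
  assert (Ci: forall q, In q (l1 :: l2 :: u1 :: u2 :: nil) -> dseg q e <= dint).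
  { intros q Hq. apply max_list_ge. apply in_map_iff. exists q; auto. }
  assert (Fin: Rmin (dseg l1 e) (dseg l2 e) <= dmax -> Rmin (dseg u1 e) (dseg u2 e) <= dmax ->
     dseg (c_near P) e <= dmax -> (edist origin (c_far P) <= edist origin e -> dseg (c_far P) e <= dmax) ->
     dmax <= Rmax (dseg l2 e) (Rmax (dseg (c_far P) e) (dseg u2 e)) -> dlb <= dmax /\ dmax <= dub).
  { intros F1 F2 F3 F4 F5. split.
    - unfold dlb. apply Rmax_lub; auto. apply Rmax_lub; auto.
      unfold D. destruct Rlt_dec; auto. apply F4. lra.
    - eapply Rle_trans; [apply F5|]. unfold dub.
      assert (dseg l2 e <= dint) by (apply Ci; simpl; auto).
      assert (dseg u2 e <= dint) by (apply Ci; simpl; auto).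
      unfold Rmax; repeat destruct Rle_dec; lra. }
  assert (Tau: s1 * s2 = 1 \/ s1 * s2 = -1) by (destruct Hs1, Hs2; subst; [left|right|right|left]; ring).
  destruct Tau as [Tau|Tau].
  - assert (W: forall p, In p P' -> 0 <= cross (rh pa) p /\ 0 <= cross p (rh pb)).
    { intros p' Hp'. apply in_map_iff in Hp'. destruct Hp' as [p [<- Hp]].
      unfold rh; rewrite !cross_rho, Tau. split; rewrite Rmult_1_l; auto. }
    pose proof (core P' X0 X1 Y0 Y1 e' (rh pa) (rh pb) (rh l1) (rh l2) (rh u1) (rh u2)
      Cx5 Cy5 HX0 (proj1 He1) (proj2 He1) HE Hbox A1 A2 A3 A4 (in_map _ _ _ Hpa) (in_map _ _ _ Hpb) W RBl RBu) as Co.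
    cbv zeta in Co. rewrite Hdm, Hnf, Hcn, Hcf, !Hf, Hne in Co.
    destruct Co as [F1 [F2 [F3 [F4 F5]]]]. apply Fin; auto.
  - assert (W: forall p, In p P' -> 0 <= cross (rh pb) p /\ 0 <= cross p (rh pa)).
    { intros p' Hp'. apply in_map_iff in Hp'. destruct Hp' as [p [<- Hp]].
      unfold rh; rewrite !cross_rho, Tau. specialize (Wa p Hp). specialize (Wb p Hp).
      unfold cross in *. split; lra. }
    pose proof (core P' X0 X1 Y0 Y1 e' (rh pb) (rh pa) (rh u1) (rh u2) (rh l1) (rh l2)
      Cx5 Cy5 HX0 (proj1 He1) (proj2 He1) HE Hbox A1 A2 A3 A4 (in_map _ _ _ Hpb) (in_map _ _ _ Hpa) W RBu RBl) as Co.
    cbv zeta in Co. rewrite Hdm, Hnf, Hcn, Hcf, !Hf, Hne in Co.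
    destruct Co as [F1 [F2 [F3 [F4 F5]]]]. apply Fin; auto.
    eapply Rle_trans; [apply F5|]. unfold Rmax; repeat destruct Rle_dec; lra.
Qed.

Theorem theorem3 (k : nat) (P : list pt) (e l1 l2 u1 u2 : pt) :
  (1 <= k <= 4)%nat ->
  P <> nil ->
  (forall p, In p P -> in_quadrant k p) ->
  in_quadrant k e ->
  theta_lb P <= theta e <= theta_ub P ->
  ray_box_intersections P (theta_lb P) l1 l2 ->
  ray_box_intersections P (theta_ub P) u1 u2 ->
  let dmax := max_list (map (fun p => dseg p e) P) in
  let D := if Rlt_dec (edist origin e) (edist origin (c_far P))
           then dseg (c_near P) e else dseg (c_far P) e in
  let dlb := Rmax (Rmin (dseg l1 e) (dseg l2 e))
               (Rmax (Rmin (dseg u1 e) (dseg u2 e)) D) in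
  let dint := max_list (map (fun q => dseg q e) (l1 :: l2 :: u1 :: u2 :: nil)) in
  let dub := Rmax dint (dseg (c_far P) e) in
  dlb <= dmax /\ dmax <= dub.
Proof.
  intros Hk HPn HP He _ Hl Hu.
  assert (Hk4: k = 1%nat \/ k = 2%nat \/ k = 3%nat \/ k = 4%nat) by lia.
  destruct Hk4 as [ Hk1 | [ Hk1 | [ Hk1 | Hk1 ]]]; subst k.
  - apply (assembly 1 1 1); auto.
    + intros q Hq. destruct (quad1 q Hq). lra.
    + left. intros q Hq. destruct (quad1 q Hq). lra.
  - apply (assembly 2 (-1) 1); auto.
    + intros q Hq. destruct (quad2 q Hq). lra.
    + right. intros q Hq. destruct (quad2 q Hq). lra.
  - apply (assembly 3 (-1) (-1)); auto.
    + intros q Hq. destruct (quad3 q Hq). lra.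
    + left. intros q Hq. destruct (quad3 q Hq). lra.
  - apply (assembly 4 1 (-1)); auto.
    + intros q Hq. destruct (quad4 q Hq). lra.
    + right. intros q Hq. destruct (quad4 q Hq). lra.
Qed.
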